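(* Let $C$ and $D$ be quasi-cyclic LDPC codes with circulant matrices (of a common size $z$ and common length), and let $H_{b(C)}$ and $H_{b(D)}$ be their base matrices. Let $C'$ (resp. $D'$) be the binary linear code with parity-check matrix $H_{b(C)}$ (resp. $H_{b(D)}$). If $C$ and $D$ satisfy the twisted condition $D^{\perp}\subset C$, then $C'$ and $D'$ satisfy the twisted condition $D'^{\perp}\subset C'$; equivalently, $H_{b(C)}\, H_{b(D)}^{T}=0$ over $\mathbb{F}_2$.
   Context: All codes are binary linear codes over $\mathbb{F}_2$. For a linear code $D\subseteq\mathbb{F}_2^n$, $D^{\perp}=\{d' : d\,d'^{T}=0\ \forall d\in D\}$. Codes $C,D$ satisfy the twisted condition if $D^{\perp}\subset C$; for parity-check matrices $H_C,H_D$ (so $C=\ker H_C$, $D=\ker H_D$) this is equivalent to $H_CH_D^T=0$. For a positive integer $z$, $I_z(1)$ is the $z\times z$ circulant permutation matrix of one circular right shift and $I_z(b)=I_z(1)^b$. A quasi-cyclic LDPC code with circulant matrices of size $z$ is given by a $J\times L$ model matrix $(p(i,j))$ with entries in $\{0,\dots,z-1\}\cup\{\infty\}$; its parity-check matrix is obtained by replacing each finite entry $p$ by $I_z(p)$ and each $\infty$ by the $z\times z$ zero matrix, and the code is the kernel of this matrix. Its base matrix is the $J\times L$ binary matrix with $1$ exactly at the positions where $p(i,j)\neq\infty$. *)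

(* Defs.v *)
From mathcomp Require Import all_boot all_algebra.
Set Implicit Arguments. Unset Strict Implicit. Unset Printing Implicit Defensive.
Import GRing.Theory.
Local Open Scope ring_scope.

Definition code_ker (m n : nat) (H : 'M['F_2]_(m, n)) : {set 'rV['F_2]_n} :=
  [set c : 'rV['F_2]_n | H *m c^T == 0].

Definition dual_code (n : nat) (D : {set 'rV['F_2]_n}) : {set 'rV['F_2]_n} :=
  [set d' : 'rV['F_2]_n | [forall d in D, d *m d'^T == 0]].

Definition twisted (n : nat) (C D : {set 'rV['F_2]_n}) : Prop :=
  dual_code D \subset C.

Lemma blk_proof (J z : nat) (i : 'I_(J * z)) : (i %/ z < J)%N.
Proof.
have : (nat_of_ord i < J * z)%N := ltn_ord i.
move: (nat_of_ord i) => k; clear i.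
case: z => [|z] hk; first by rewrite muln0 in hk.
by rewrite ltn_divLR.
Qed.
Definition blk (J z : nat) (i : 'I_(J * z)) : 'I_J := Ordinal (blk_proof i).

(* Entry (a,b) of the circulant permutation matrix I_z(p) = I_z(1)^p,
   where I_z(1) is the identity with columns circularly shifted right by one:
   I_z(1)(a, b) = 1 iff b = a + 1 mod z. *)
Definition circ_entry (z : nat) (p : 'I_z) (a b : nat) : 'F_2 :=
  if (b == (a + p) %% z)%N then 1 else 0.

(* Model matrix: entries in {0..z-1} (Some p) or infinity (None). *)
Definition qc_pcm (z J L : nat) (P : 'M[option 'I_z]_(J, L)) : 'M['F_2]_(J * z, L * z) :=
  \matrix_(i < J * z, j < L * z)
    match P (blk i) (blk j) with
    | Some p => circ_entry p (i %% z) (j %% z)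
    | None => 0
    end.

Definition base_mx (z J L : nat) (P : 'M[option 'I_z]_(J, L)) : 'M['F_2]_(J, L) :=
  \matrix_(i < J, j < L) if P i j is Some _ then 1 else 0.

(* Main.v *)
Require Import Defs.
From mathcomp Require Import all_boot all_algebra.
From mathcomp Require Import zify.
Set Implicit Arguments. Unset Strict Implicit. Unset Printing Implicit Defensive.
Import GRing.Theory.

Lemma sum_blk (J z : nat) (b : 'I_J) (P : nat -> bool) (s0 : nat)
  (hs0 : (s0 < z)%N) (hP : forall s, (s < z)%N -> P s = (s == s0)) :
  (\sum_(j : 'I_(J*z) | blk j == b) (if P (j %% z)%N then 1 else 0 : 'F_2) = 1)%R.
Proof.
have hj0 : (b * z + s0 < J * z)%N.
  have := ltn_ord b; nia.
pose j0 := Ordinal hj0.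
have hz : (0 < z)%N by case: z hs0 {hj0 j0 hP}.
have bj0 : blk j0 == b.
  apply/eqP/val_inj => /=; rewrite divnMDl // divn_small // addn0 //.
rewrite (bigD1 j0) //= big1 ?GRing.addr0.
  by rewrite modnMDl modn_small // hP // eqxx.
move=> j /andP [/eqP bj nj].
rewrite hP ?ltn_mod //; case: eqP => // hs.
case/eqP: nj; apply/val_inj => /=.
rewrite (divn_eq j z) hs; congr (_ * _ + _)%N.
by have := congr1 val bj.
Qed.

Local Open Scope ring_scope.

Lemma twisted_mul (m1 m2 n : nat) (A : 'M['F_2]_(m1, n)) (B : 'M['F_2]_(m2, n)) :
  twisted (code_ker A) (code_ker B) -> (A *m B^T = 0)%R.
Proof.
move=> /subsetP H; apply/matrixP => i j.
have hr : row j B \in dual_code (code_ker B).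
  rewrite inE; apply/forallP => d; apply/implyP; rewrite inE => /eqP hd.
  by rewrite -(trmxK (d *m _)) trmx_mul trmxK -row_mul hd linear0 trmx0.
move: (H _ hr); rewrite inE => /eqP/matrixP/(_ i 0) e.
rewrite !mxE in e; rewrite [LHS]mxE [RHS]mxE; apply: (etrans _ e).
apply: eq_bigr => k _; rewrite !mxE //.
Qed.

Lemma mul_twisted (m1 m2 n : nat) (A : 'M['F_2]_(m1, n)) (B : 'M['F_2]_(m2, n)) :
  (A *m B^T = 0)%R -> twisted (code_ker A) (code_ker B).
Proof.
move=> H; apply/subsetP => d; rewrite !inE => /forallP hd.
apply/eqP/matrixP => i k.
have hr : row i A \in code_ker B.
  by rewrite inE -(trmxK (B *m _)) trmx_mul trmxK -row_mul H linear0 trmx0.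
move: (hd (row i A)); rewrite hr /= => /eqP/matrixP/(_ 0 0) e.
rewrite !mxE in e; rewrite [LHS]mxE [RHS]mxE (ord1 k); apply: (etrans _ e).
apply: eq_bigr => l _; rewrite !mxE //.
Qed.

Lemma modinv (z t q s : nat) : (t < z)%N -> (q < z)%N -> (s < z)%N ->
  (t == (s + q) %% z)%N = (s == (t + z - q) %% z)%N.
Proof.
move=> ht hq hs.
have e : (t + z - q + q = t + z)%N by rewrite subnK // ltnW // ltn_addl.
apply/eqP/eqP => [et|->].
- have h : (t + z - q == s %[mod z]) by rewrite -(eqn_modDr q) e modnDr et modn_mod.
  by move/eqP: h; rewrite (modn_small hs) => ->.
- by rewrite modnDml e modnDr modn_small.
Qed.

Theorem mainTheorem2 (z J1 J2 L : nat) (hz : (0 < z)%N)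
    (PC : 'M[option 'I_z]_(J1, L)) (PD : 'M[option 'I_z]_(J2, L)) :
  twisted (code_ker (qc_pcm PC)) (code_ker (qc_pcm PD)) ->
  twisted (code_ker (base_mx PC)) (code_ker (base_mx PD)).
Proof.
move=> /twisted_mul H; apply: mul_twisted.
apply/matrixP => a b.
have hi0 : (a * z < J1 * z)%N by rewrite ltn_pmul2r.
pose i0 := Ordinal hi0.
have bi0 : blk i0 = a by apply/val_inj => /=; rewrite mulnK.
have mi0 : (i0 %% z = 0)%N by rewrite /= modnMl.
transitivity (\sum_(j | blk j == b) (qc_pcm PC *m (qc_pcm PD)^T) i0 j); last first.
  by rewrite [RHS]mxE; apply: big1 => j _; rewrite H mxE.
rewrite [RHS](eq_bigr (fun j => \sum_k qc_pcm PC i0 k * qc_pcm PD j k)); last first.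
  by move=> j _; rewrite mxE; apply: eq_bigr => k _; rewrite [_^T _ _]mxE.
rewrite exchange_big /=.
rewrite [RHS](eq_bigr (fun k => qc_pcm PC i0 k * (if PD b (blk k) is Some _ then 1 else 0))); last first.
  move=> k _; rewrite -big_distrr /=; congr (_ * _).
  case E: (PD b (blk k)) => [q|].
  - rewrite (eq_bigr (fun j : 'I_(J2 * z) => if (fun s => (k %% z == (s + q) %% z)%N) (j %% z)%N then 1 else 0)); last first.
      by move=> j /eqP bj; rewrite mxE bj E /circ_entry.
    apply: (@sum_blk _ _ b (fun s => (k %% z == (s + q) %% z)%N) ((k %% z + z - q) %% z)%N); first by rewrite ltn_mod.
    by move=> s hs; rewrite modinv // ltn_mod.
  - by apply: big1 => j /eqP bj; rewrite mxE bj E.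
rewrite (partition_big (@blk L z) xpredT) //=.
rewrite !mxE; apply: eq_bigr => l _.
rewrite (eq_bigr (fun i => qc_pcm PC i0 i * (if PD b l is Some _ then 1 else 0))); last by move=> i /eqP ->.
rewrite -big_distrl /= !mxE; congr (_ * _).
case E: (PC a l) => [p|].
- rewrite (eq_bigr (fun k : 'I_(L * z) => if (fun s => (s == (0 + p) %% z)%N) (k %% z)%N then 1 else 0)); last first.
    by move=> k /eqP bk; rewrite mxE bk bi0 E mi0 /circ_entry.
  symmetry; apply: (@sum_blk _ _ l (fun s => (s == (0 + p) %% z)%N) p) => // s _; rewrite add0n modn_small //.
- by symmetry; apply: big1 => k /eqP bk; rewrite mxE bk bi0 E.
Qed.
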